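(* Let $n\ge3$ and $2\le t\le\lceil n/2\rceil$, and let $\mathsf{X}=\mathsf{C}_n(t;i,i+1)$ with $1\le i<t$. Then \[F_2(\mathsf{X})=\begin{cases} n-1 & \text{if } i=1 \text{ and } t=2,\\ (2t-3)(n-t+1) & \text{otherwise.}\end{cases}\]
   Context: $\mathsf{C}_n(t;i,j)$ ($i<j$) denotes the $n$-cycle with vertices $v_1,\dots,v_n$ in cyclic order (edges $v_kv_{k+1}$ and $v_nv_1$), with marked (ramified) vertices $v_1$ and $v_t$, together with one additional edge between $v_i$ and $v_j$. $F_2$ is the number of spanning forests consisting of two trees, one containing $v_1$ and the other containing $v_t$. *)

(* Defs.v *)
From mathcomp Require Import all_boot.
Set Implicit Arguments. Unset Strict Implicit. Unset Printing Implicit Defensive.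

(* The multigraph C_n(t; i, j): vertices v_1..v_n are encoded as 'I_n with
   v_k <-> k-1.  Edges are indexed by 'I_(n.+1):
   edge e < n is the cycle edge v_(e+1) v_(e+2) (indices mod n, i.e. 0-indexed
   e -- (e+1) mod n), and edge n is the additional edge v_i v_j.
   The graph may have a parallel edge (e.g. j = i+1); edges are distinct
   objects, so spanning forests are counted as edge subsets of the multigraph. *)
Definition Cn_ends (n i j : nat) (e : nat) : nat * nat :=
  if e < n then (e, (e.+1) %% n) else (i.-1, j.-1).

Definition adjF (n i j : nat) (F : {set 'I_(n.+1)}) : rel 'I_n :=
  fun x y => [exists e in F,
    ((( Cn_ends n i j e).1 == x) && ((Cn_ends n i j e).2 == y)) ||
    (((Cn_ends n i j e).1 == y) && ((Cn_ends n i j e).2 == x))].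

(* F is acyclic: every edge of F is a bridge of (V, F), i.e. its endpoints are
   not connected in (V, F \ {e}).  (A loop would never satisfy this.) *)
Definition acyclicF (n i j : nat) (F : {set 'I_(n.+1)}) : bool :=
  [forall e in F, forall x : 'I_n, forall y : 'I_n,
     ((val x == (Cn_ends n i j e).1) && (val y == (Cn_ends n i j e).2)) ==>
     ~~ connect (adjF i j (F :\ e)) x y].

Definition two_forest (n t i j : nat) (F : {set 'I_(n.+1)}) : bool :=
  acyclicF i j F &&
  [forall r : 'I_n, forall s : 'I_n,
     ((val r == 0) && (val s == t.-1)) ==>
     (~~ connect (adjF i j F) r s &&
      [forall x : 'I_n, connect (adjF i j F) r x || connect (adjF i j F) s x])].

Definition F2 (n t i j : nat) : nat :=
  #|[set F : {set 'I_(n.+1)} | two_forest t i j F]|.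

(* Main.v *)
Require Import Defs.
From mathcomp Require Import all_boot zify.
Set Implicit Arguments. Unset Strict Implicit. Unset Printing Implicit Defensive.

Section S.
Variables n t i : nat.
Hypothesis n3 : 3 <= n.
Hypothesis t2 : 2 <= t.
Hypothesis tn : t < n.
Hypothesis i1 : 1 <= i.
Hypothesis it : i < t.

Definition cyc (e : 'I_n.+1) : nat := if e < n then nat_of_ord e else i.-1.
Lemma cyc_lt e : cyc e < n.
Proof. rewrite /cyc; case: ifP => //; lia. Qed.

Definition present (F : {set 'I_n.+1}) (k : nat) : bool :=
  [exists e in F, cyc e == k].

Lemma endsE (e : 'I_n.+1) : Cn_ends n i i.+1 e = (cyc e, (cyc e).+1 %% n).
Proof. rewrite /Cn_ends /cyc; case: ifP => // _ /=.
rewrite prednK // modn_small //; lia. Qed.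

Lemma adjE F (x y : 'I_n) : @adjF n i i.+1 F x y =
  [exists e in F, ((cyc e == x) && ((cyc e).+1 %% n == y)) ||
                  ((cyc e == y) && ((cyc e).+1 %% n == x))].
Proof. by apply: eq_existsb => e; rewrite endsE. Qed.

Lemma adj_sym F : symmetric (@adjF n i i.+1 F).
Proof. by move=> x y; rewrite !adjE; apply: eq_existsb => e; rewrite (orbC (_ && _)). Qed.

Lemma conn_sym F : connect_sym (@adjF n i i.+1 F).
Proof. exact: sym_connect_sym (adj_sym F). Qed.

Lemma adj_present F k (x y : 'I_n) : present F k -> val x = k ->
  val y = k.+1 %% n -> @adjF n i i.+1 F x y.
Proof.
move=> /existsP [e /andP [eF /eqP ce]] hx hy.
rewrite adjE; apply/existsP; exists e; by rewrite eF ce -hy -hx !eqxx.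
Qed.

Lemma path_conn F (x y : 'I_n) : x <= y ->
  (forall k, x <= k < y -> present F k) -> connect (@adjF n i i.+1 F) x y.
Proof.
move Hd: (y - x) => d; elim: d y Hd => [|d IH] y Hd le Hp.
  have -> : y = x by apply: ord_inj; lia.
  exact: connect0.
have := ltn_ord y => yn.
have y0: y.-1 < n by lia.
apply: (@connect_trans _ _ (Ordinal y0)).
  apply: IH => /=; [lia|lia| move=> k hk; apply: Hp; lia].
apply: connect1; apply: (@adj_present _ y.-1) => //=.
  apply: Hp; lia.
rewrite prednK ?modn_small //; lia.
Qed.

Lemma modS (c : nat) : c < n -> c.+1 %% n = if c.+1 < n then c.+1 else 0.
Proof.
move=> h; case: ifP => h2; first by rewrite modn_small.
have ->: c.+1 = n by lia.
by rewrite modnn.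
Qed.

Lemma arc_closed F p q : p < q < n -> ~~ present F p -> ~~ present F q ->
  closed (@adjF n i i.+1 F) [pred v : 'I_n | p < v <= q].
Proof.
move=> hpq hp hq x y; rewrite adjE => /existsP [e /andP [eF H]].
have hc := cyc_lt e.
have cp: cyc e != p.
  apply/negP => /eqP ce; move/negP: hp; apply; apply/existsP; exists e.
  by rewrite eF ce eqxx.
have cq: cyc e != q.
  apply/negP => /eqP ce; move/negP: hq; apply; apply/existsP; exists e.
  by rewrite eF ce eqxx.
have := ltn_ord x; have := ltn_ord y.
rewrite (modS hc) in H.
rewrite !inE /=.
move: H cp cq; case: ifP => hh; case/orP => /andP [/eqP h1 /eqP h2] ? ? ? ?;
  apply/idP/idP => ?; lia.
Qed.

Lemma arc_conn F p q (x y : 'I_n) : p < q < n -> ~~ present F p -> ~~ present F q ->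
  connect (@adjF n i i.+1 F) x y -> (p < x <= q) = (p < y <= q).
Proof.
move=> h1 h2 h3 /(closed_connect (arc_closed h1 h2 h3)).
by rewrite !inE.
Qed.


Definition Dom := [set p : ('I_(t.-1) * bool) * 'I_(n - t + 1) |
   ~~ ((p.1.1 == i.-1 :> nat) && p.1.2)].

Definition g (p : ('I_(t.-1) * bool) * 'I_(n - t + 1)) : {set 'I_n.+1} :=
  ~: [set inord p.1.1; inord (if p.1.2 then i.-1 else n); inord (t.-1 + p.2)].

Lemma in_g (a : 'I_t.-1) (c : bool) (b : 'I_(n - t + 1)) (e : 'I_n.+1) : (e \in g ((a, c), b)) =
  [&& val e != a, val e != (if c then i.-1 else n) & val e != t.-1 + b].
Proof.
have := ltn_ord a; have := ltn_ord b => hb ha.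
rewrite /g !inE !negb_or -!val_eqE /= !inordK //; try lia.
by case: c; lia.
Qed.

Lemma present_g (a : 'I_t.-1) (c : bool) (b : 'I_(n - t + 1)) k : ~~ ((a == i.-1 :> nat) && c) -> k < n ->
  present (g ((a, c), b)) k = (k != a) && (k != t.-1 + b).
Proof.
have := ltn_ord a; have := ltn_ord b => hb ha hD hk.
apply/idP/idP.
  move/existsP => [e /andP [eF /eqP ce]]; rewrite in_g in eF.
  have := ltn_ord e; move: ce eF; rewrite /cyc; case: ifP => he ce;
  case: c hD => /=; lia.
move=> hk2.
case hc: ((k == i.-1) && c).
  apply/existsP; exists ord_max; rewrite in_g /cyc /= ltnn.
  move: hc hD; case: c => /=; lia.
apply/existsP; exists (inord k); rewrite in_g /cyc /= inordK; last lia.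
move: hc hD hk2; case: c => /=; case: ifP; lia.
Qed.

Lemma present_sub (F F' : {set 'I_n.+1}) k : F' \subset F -> present F' k -> present F k.
Proof.
move=> /subsetP sub /existsP [e /andP [eF ce]]; apply/existsP; exists e.
by rewrite (sub _ eF).
Qed.

Lemma g_forest p : p \in Dom -> two_forest t i i.+1 (g p).
Proof.
case: p => [[a c] b]; rewrite inE /= => hD.
have := ltn_ord a; have := ltn_ord b => hb ha.
have pg := present_g b hD.
apply/andP; split.
  apply/forallP => e; apply/implyP => eF; apply/forallP => x; apply/forallP => y.
  apply/implyP => /andP [/eqP hx /eqP hy]; rewrite endsE /= in hx hy.
  have hce := cyc_lt e.
  have pF' : ~~ present (g ((a, c), b) :\ e) (cyc e).
    apply/negP => /existsP [e' /andP [e'F /eqP ce']].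
    move: e'F; rewrite in_setD1 => /andP [ne eF']; move: ne.
    have eF2 := eF; rewrite in_g in eF2; rewrite in_g in eF'.
    rewrite -val_eqE; have := ltn_ord e; have := ltn_ord e'.
    move: ce' eF' eF2; rewrite /cyc; case: ifP => h1; case: ifP => h2;
      case: c hD pg eF => /= hD pg eF; lia.
  have pa : ~~ present (g ((a, c), b) :\ e) a.
    apply/negP => /(present_sub (subsetDl _ _)); rewrite pg; [lia|lia].
  have cea : cyc e != a.
    have : present (g ((a, c), b)) (cyc e).
      by apply/existsP; exists e; rewrite eF eqxx.
    by rewrite pg // => /andP [].
  apply/negP => C.
  have xn := ltn_ord x; have yn := ltn_ord y.
  rewrite (modS hce) in hy.
  case: (ltngtP (cyc e) a) => h.
  - have := arc_conn (p := cyc e) (q := a) _ pF' pa C.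
    move: hy; case: ifP => ? ?; lia.
  - have := arc_conn (p := a) (q := cyc e) _ pa pF' C.
    move: hy; case: ifP => ? ?; lia.
  - by rewrite h eqxx in cea.
apply/forallP => r; apply/forallP => s; apply/implyP => /andP [/eqP hr /eqP hs].
have {}hr : nat_of_ord r = 0 by []. have {}hs : nat_of_ord s = t.-1 by [].
have pa : ~~ present (g ((a, c), b)) a by rewrite pg; lia.
have pB : ~~ present (g ((a, c), b)) (t.-1 + b) by rewrite pg; lia.
apply/andP; split.
  apply/negP => C; have := arc_conn (p := a) (q := t.-1 + b) _ pa pB C; lia.
apply/forallP => v; have vn := ltn_ord v.
case: (leqP v a) => h1.
  apply/orP; left; apply: path_conn; first lia.
  move=> k hk; rewrite pg; lia.
case: (leqP v (t.-1 + b)) => h2.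
  apply/orP; right; case: (leqP v t.-1) => h3.
    rewrite conn_sym; apply: path_conn; first lia.
    move=> k hk; rewrite pg; lia.
  apply: path_conn; first lia.
  move=> k hk; rewrite pg; lia.
apply/orP; left; rewrite conn_sym.
have hn1 : n.-1 < n by lia.
apply: (@connect_trans _ _ (Ordinal hn1)).
  apply: path_conn => /=; first lia.
  move=> k hk; rewrite pg; lia.
apply: connect1; apply: (@adj_present _ n.-1) => //=.
  rewrite pg; lia.
rewrite prednK ?modnn; lia.
Qed.


Lemma wit (G : {set 'I_n.+1}) e k : e \in G -> cyc e = k -> present G k.
Proof. by move=> eG ce; apply/existsP; exists e; rewrite eG ce eqxx. Qed.

Lemma cyc_inord k : k < n -> cyc (inord k) = k.
Proof. move=> hk; rewrite /cyc inordK; [rewrite hk // | lia]. Qed.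

Lemma cyc_max : cyc ord_max = i.-1.
Proof. by rewrite /cyc /= ltnn. Qed.

Lemma forest_g F : two_forest t i i.+1 F -> exists2 p, p \in Dom & F = g p.
Proof.
move=> /andP [acyc /forallP cond].
have r0 : 0 < n by lia.
have st : t.-1 < n by lia.
have := cond (Ordinal r0) => /forallP /(_ (Ordinal st)).
rewrite /= !eqxx /= => /andP [nc /forallP cov].
have hi1 : i.-1 < n by lia.
have hi : i < n by lia.
have dbl : ~~ (((inord i.-1 : 'I_n.+1) \in F) && (ord_max \in F)).
  apply/negP => /andP [h1 h2].
  move/forallP: acyc => /(_ ord_max); rewrite h2 /=.
  move=> /forallP /(_ (Ordinal hi1)) /forallP /(_ (Ordinal hi)).
  rewrite /Cn_ends ltnn /= !eqxx /= => /negP; apply.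
  apply: connect1; apply: (@adj_present _ i.-1) => //=.
    apply: (@wit _ (inord i.-1)); last by rewrite cyc_inord.
    rewrite in_setD1 h1 andbT -val_eqE /= inordK; lia.
  rewrite prednK // modn_small //.
set R := Ordinal r0 in nc cov *.
set S := Ordinal st in nc cov *.
have [a ha1 ha2] : exists2 a, a < t.-1 & ~~ present F a.
  case E: [exists a : 'I_t.-1, ~~ present F a].
    by move/existsP: E => [a h]; exists a.
  move/negbT/existsPn: E => E; exfalso; move/negP: nc; apply.
  apply: path_conn => /=; first lia.
  move=> k hk; have hk2 : k < t.-1 by lia.
  by have := E (Ordinal hk2); rewrite negbK.
have [b hb1 hb2] : exists2 b, t.-1 <= b < n & ~~ present F b.
  case E: [exists b : 'I_n, (t.-1 <= b) && ~~ present F b].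
    by move/existsP: E => [b h]; exists b; case/andP: h => h1 h2; rewrite ?h1 ?ltn_ord.
  move/negbT/existsPn: E => E; exfalso; move/negP: nc; apply.
  rewrite conn_sym.
  have hn1 : n.-1 < n by lia.
  apply: (@connect_trans _ _ (Ordinal hn1)).
    apply: path_conn => /=; first lia.
    move=> k hk; have hk2 : k < n by lia.
    by have := E (Ordinal hk2); rewrite /= negb_and negbK; case/orP => // ?; lia.
  apply: connect1; apply: (@adj_present _ n.-1) => //=; last by rewrite prednK ?modnn; lia.
  by have := E (Ordinal hn1); rewrite /= negb_and negbK; case/orP => // ?; lia.
have uniq2 : forall p q, p < q < n -> ~~ present F p -> ~~ present F q ->
    (q < t.-1) || (t.-1 <= p) -> False.
  move=> p q hpq hp hq ht.
  have hp1 : p.+1 < n by lia.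
  have := cov (Ordinal hp1) => /orP [] C.
    have := arc_conn hpq hp hq C; rewrite /=.
    move=> E; have : p < p.+1 <= q by lia. by rewrite -E.
  have := arc_conn hpq hp hq C; rewrite /=.
  case E1: (p < t.-1 <= q); case E2: (p < p.+1 <= q) => //; lia.
have ua : forall k, k < t.-1 -> ~~ present F k -> k = a.
  move=> k hk hpk; case: (ltngtP k a) => // h.
    by exfalso; apply: (uniq2 k a) => //; lia.
  by exfalso; apply: (uniq2 a k) => //; lia.
have ub : forall k, t.-1 <= k < n -> ~~ present F k -> k = b.
  move=> k hk hpk; case: (ltngtP k b) => // h.
    by exfalso; apply: (uniq2 k b) => //; lia.
  by exfalso; apply: (uniq2 b k) => //; lia.
have pall : forall k, k < n -> k != a -> k != b -> present F k.
  move=> k hk h1 h2; case hp0: (present F k) => //; have hp := negbT hp0.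
  case: (ltnP k t.-1) => h.
    by move: (ua k h hp); move/eqP: h1.
  by move: (ub k (introT andP (conj h hk)) hp); move/eqP: h2.
have hb' : b - t.-1 < n - t + 1 by lia.
exists ((Ordinal ha1, (a != i.-1) && ((inord i.-1 : 'I_n.+1) \notin F)), Ordinal hb').
  by rewrite inE /=; case: (a == i.-1).
apply/setP => e; rewrite in_g /=.
have he := ltn_ord e.
have hbb : t.-1 + (b - t.-1) = b by lia.
rewrite hbb.
case: (ltnP e n) => hen.
  have ce : cyc e = e by rewrite /cyc hen.
  case Ea: (nat_of_ord e == a).
    move/eqP: Ea => Ea; rewrite /=; apply/negP => eF.
    by move/negP: ha2; apply; apply: (wit eF); rewrite ce.
  case Eb: (nat_of_ord e == b).
    move/eqP: Eb => Eb; rewrite /= andbF; apply/negbTE/negP => eF.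
    by move/negP: hb2; apply; apply: (wit eF); rewrite ce.
  have := pall e hen (negbT Ea) (negbT Eb) => /existsP [e' /andP [e'F /eqP ce']].
  case Ei: (nat_of_ord e == i.-1).
    move/eqP: Ei => Ei.
    have ee : e = inord i.-1 by apply: ord_inj; rewrite inordK; lia.
    have ai : (a != i.-1) by rewrite -Ei eq_sym Ea.
    rewrite ai /= -ee Ei.
    case: (e \in F) => /=; rewrite ?eqxx //; lia.
  have ee : e' = e.
    apply: ord_inj; move: ce'; rewrite /cyc; case: ifP => h; lia.
  have -> : e \in F by rewrite -ee.
  case: ifP => _ /=; lia.
have ee : e = ord_max by apply: ord_inj; rewrite /=; lia.
have en : nat_of_ord e = n by rewrite ee.
rewrite en.
have na : (n != a) && (n != b) by lia.
case Ea: (a == i.-1).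
  rewrite /= eqxx /=; move/eqP: Ea => Ea.
  rewrite andbF; apply/negbTE/negP => eF.
  by move/negP: ha2; apply; apply: (wit eF); rewrite ee cyc_max.
rewrite /=.
case Ei: ((inord i.-1 : 'I_n.+1) \in F).
  rewrite /= eqxx /= andbF; apply/negbTE/negP => eF.
  by move/negP: dbl; apply; rewrite Ei -ee eF.
rewrite /=.
have := pall i.-1 hi1 ltac:(by rewrite eq_sym Ea) ltac:(lia) => /existsP [e' /andP [e'F /eqP ce']].
have : e' = e.
  move: ce'; rewrite /cyc; case: ifP => h ce'.
    exfalso; have e'i : e' = inord i.-1 by apply: ord_inj; rewrite inordK; lia.
    by move: e'F; rewrite e'i Ei.
  by rewrite ee; apply: ord_inj => /=; have := ltn_ord e'; lia.
move=> ee'; rewrite -ee' e'F.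
have : n != i.-1 by lia.
move=> -> /=; lia.
Qed.



Lemma max_in_g (a : 'I_t.-1) (c : bool) (b : 'I_(n - t + 1)) :
  (ord_max \in g ((a, c), b)) = c.
Proof.
have := ltn_ord a; have := ltn_ord b => ? ?.
rewrite in_g /=; case: c => /=; last by rewrite eqxx andbF.
apply/and3P; split; lia.
Qed.

Lemma B_in_g (a : 'I_t.-1) (c : bool) (b b' : 'I_(n - t + 1)) :
  (inord (t.-1 + b') \in g ((a, c), b)) = (b' != b :> nat).
Proof.
have := ltn_ord a; have := ltn_ord b; have := ltn_ord b' => ? ? ?.
rewrite in_g /= inordK; last lia.
case: c => /=; apply/idP/idP.
- by case/and3P => _ _ ?; lia.
- move=> ?; apply/and3P; split; lia.
- by case/and3P => _ _ ?; lia.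
- move=> ?; apply/and3P; split; lia.
Qed.

Lemma g_inj : {in Dom &, injective g}.
Proof.
move=> [[a c] b] [[a' c'] b']; rewrite !inE /= => hD hD' E.
have m : forall e, (e \in g (a, c, b)) = (e \in g (a', c', b')) by move=> e; rewrite E.
have cc : c = c' by rewrite -(max_in_g a c b) -(max_in_g a' c' b') m.
have bb : b = b'.
  apply: ord_inj; apply/eqP; apply/negPn.
  by rewrite -(B_in_g a' c' b' b) -m B_in_g eqxx.
have := ltn_ord a; have := ltn_ord a' => ? ?.
have h3 := m (inord a); rewrite !in_g /= inordK in h3; last lia.
clear m E; subst c' b'.
have aa : a = a' :> nat.
  move: h3; rewrite eqxx /=.
  case: c hD hD' => /= hD hD'.
    move=> /esym /negbT; rewrite !negb_and !negbK => /or3P [] /eqP; lia.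
  move=> /esym /negbT; rewrite !negb_and !negbK => /or3P [] /eqP; lia.
by congr pair; congr pair; apply: ord_inj.
Qed.

Lemma card_Dom : #|Dom| = (2 * t - 3) * (n - t + 1).
Proof.
have hi0 : i.-1 < t.-1 by lia.
have -> : Dom = setX [set~ (Ordinal hi0, true)] setT.
  apply/setP => [[[a c] b]]; rewrite !inE /=. rewrite andbT xpair_eqE -val_eqE /=.
  by case: c; rewrite ?andbT ?andbF.
rewrite cardsX cardsC1 cardsT card_prod card_ord card_bool card_ord.
lia.
Qed.

Lemma main_count : F2 n t i i.+1 = (2 * t - 3) * (n - t + 1).
Proof.
rewrite /F2.
have -> : [set F : {set 'I_n.+1} | two_forest t i i.+1 F] = g @: Dom.
  apply/setP => F; rewrite inE; apply/idP/imsetP.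
    by move/forest_g.
  by move=> [p hp ->]; apply: g_forest.
by rewrite (card_in_imset g_inj) card_Dom.
Qed.

End S.

Theorem lemma7p5 (n t i : nat) :
  3 <= n -> 2 <= t -> t <= uphalf n -> 1 <= i -> i < t ->
  F2 n t i i.+1 =
    (if (i == 1) && (t == 2) then n - 1 else (2 * t - 3) * (n - t + 1)).
Proof.
move=> n3 t2 tu i1 it.
have tn : t < n by move: tu; rewrite uphalfE -divn2; lia.
rewrite (main_count n3 t2 tn i1 it).
case: ifP => // /andP [_ /eqP ->]; lia.
Qed.
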